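(* Let $p,q$ be squarefree positive integers such that $K=\mathbb{Q}(\sqrt p,\sqrt q)$ has degree $4$ over $\mathbb{Q}$, and let $r=\frac{pq}{\gcd(p,q)^2}$. Assume that $\alpha$ is a totally positive element of $\mathcal{O}_K$ satisfying $N(\alpha)<2\min(\sqrt p,\sqrt q,\sqrt r)$, where $N$ is the norm from $K$ to $\mathbb{Q}$, and such that $n\nmid\alpha$ in $\mathcal{O}_K$ for every integer $n>1$. Then $\alpha$ is indecomposable.
   Context: An element of $K$ is totally positive if all its images under the real embeddings of $K$ are positive. A totally positive $\alpha\in\mathcal{O}_K$ is (additively) indecomposable if it cannot be written as $\alpha=\beta+\gamma$ with $\beta,\gamma$ totally positive elements of $\mathcal{O}_K$. *)

(* Defs.v *)
From HB Require Import structures.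
From mathcomp Require Import all_boot all_order all_algebra all_field.
Set Implicit Arguments. Unset Strict Implicit. Unset Printing Implicit Defensive.
Import Order.TTheory GRing.Theory Num.Theory.
Local Open Scope ring_scope.

Definition squarefree (n : nat) : Prop := forall d : nat, (d * d %| n)%N -> d = 1%N.

Definition rr (p q : nat) : nat := (p * q %/ (gcdn p q) ^ 2)%N.

Definition sq (n : nat) : algC := sqrtC (n%:R).

(* K = Q(sqrt p, sqrt q) is spanned over Q by 1, sqrt p, sqrt q, sqrt r;
   it has degree 4 iff these four numbers are Q-linearly independent. *)
Definition biquad_deg4 (p q : nat) : Prop :=
  forall a b c d : rat,
    ratr a + ratr b * sq p + ratr c * sq q + ratr d * sq (rr p q) = 0 ->
    [/\ a = 0, b = 0, c = 0 & d = 0].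

(* An element of K, given by its rational coordinates (a,b,c,d) w.r.t.
   the basis 1, sqrt p, sqrt q, sqrt r. *)
Definition Kelt := (rat * rat * rat * rat)%type.

(* The four (real) embeddings of K: sqrt p |-> (-1)^s sqrt p,
   sqrt q |-> (-1)^t sqrt q, hence sqrt r |-> (-1)^(s+t) sqrt r.
   emb p q false false is the identity (the element itself in algC). *)
Definition emb (p q : nat) (s t : bool) (x : Kelt) : algC :=
  ratr x.1.1.1 + (-1) ^+ s * ratr x.1.1.2 * sq p
  + (-1) ^+ t * ratr x.1.2 * sq q + (-1) ^+ (s (+) t) * ratr x.2 * sq (rr p q).

Definition Kval (p q : nat) (x : Kelt) : algC := emb p q false false x.

Definition inOK (p q : nat) (x : Kelt) : Prop := Kval p q x \in Aint.

Definition totpos (p q : nat) (x : Kelt) : Prop :=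
  forall s t : bool, 0 < emb p q s t x.

Definition normK (p q : nat) (x : Kelt) : algC :=
  emb p q false false x * emb p q false true x *
  emb p q true false x * emb p q true true x.

Definition indecomposable (p q : nat) (x : Kelt) : Prop :=
  inOK p q x /\ totpos p q x /\
  ~ (exists y z : Kelt, [/\ inOK p q y, inOK p q z, totpos p q y, totpos p q z
        & Kval p q x = Kval p q y + Kval p q z]).

(* Main.v *)
Require Import Defs.
From HB Require Import structures.
From mathcomp Require Import all_boot all_order all_algebra all_field.
From mathcomp Require Import ring lra zify.
Import Order.TTheory GRing.Theory Num.Theory.
Local Open Scope ring_scope.

Definition kadd (x y : Kelt) : Kelt :=
  (x.1.1.1 + y.1.1.1, x.1.1.2 + y.1.1.2, x.1.2 + y.1.2, x.2 + y.2).
Definition kopp (x : Kelt) : Kelt := (- x.1.1.1, - x.1.1.2, - x.1.2, - x.2).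
Definition kscale (c : rat) (x : Kelt) : Kelt :=
  (c  *  x.1.1.1, c  *  x.1.1.2, c  *  x.1.2, c  *  x.2).
Definition kconst (c : rat) : Kelt := (c, 0, 0, 0).
Definition kmul (p q : nat) (x y : Kelt) : Kelt :=
  (x.1.1.1 * y.1.1.1 + x.1.1.2 * y.1.1.2 * p%:R + x.1.2 * y.1.2 * q%:R + x.2 * y.2 * (rr p q)%:R,
   x.1.1.1 * y.1.1.2 + x.1.1.2 * y.1.1.1 + (x.1.2 * y.2 + x.2 * y.1.2) * (q %/ gcdn p q)%:R,
   x.1.1.1 * y.1.2 + x.1.2 * y.1.1.1 + (x.1.1.2 * y.2 + x.2 * y.1.1.2) * (p %/ gcdn p q)%:R,
   x.1.1.1 * y.2 + x.2 * y.1.1.1 + (x.1.1.2 * y.1.2 + x.1.2 * y.1.1.2) * (gcdn p q)%:R).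
Definition cj (s t : bool) (x : Kelt) : Kelt :=
  (x.1.1.1, (-1)^+s  *  x.1.1.2, (-1)^+t  *  x.1.2, (-1)^+(s (+) t)  *  x.2).

Lemma qD (a b : rat) : ratr (a + b) = ratr a + ratr b :> algC.
Proof. by rewrite rmorphD. Qed.
Lemma qM (a b : rat) : ratr (a * b) = ratr a * ratr b :> algC.
Proof. by rewrite rmorphM. Qed.
Lemma qN (a : rat) : ratr (- a) = - ratr a :> algC.
Proof. by rewrite rmorphN. Qed.
Lemma qn (n : nat) : ratr (n%:R) = n%:R :> algC.
Proof. by rewrite ratr_nat. Qed.
Lemma q0 : ratr 0 = 0 :> algC.
Proof. by rewrite rmorph0. Qed.

Lemma emb_kadd p q s t x y : emb p q s t (kadd x y) = emb p q s t x + emb p q s t y.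
Proof. rewrite /emb /= !rmorphD /=; ring. Qed.
Lemma emb_kopp p q s t x : emb p q s t (kopp x) = - emb p q s t x.
Proof. rewrite /emb /= !rmorphN /=; ring. Qed.
Lemma emb_kscale p q s t c x : emb p q s t (kscale c x) = ratr c  *  emb p q s t x.
Proof. rewrite /emb /= !rmorphM /=; ring. Qed.
Lemma emb_kconst p q s t c : emb p q s t (kconst c) = ratr c.
Proof. rewrite /emb /= !rmorph0 /=; ring. Qed.
Lemma emb_cj p q s t s0 t0 x :
  emb p q s t (cj s0 t0 x) = emb p q (s (+) s0) (t (+) t0) x.
Proof.
rewrite /emb /= !rmorphM !rmorph_sign /=.
by case: s; case: t; case: s0; case: t0; rewrite /= ?expr0 ?expr1; ring.
Qed.

Lemma emb_mul_gen (u w v G P Q R P1 Q1 : algC) (a b c d a' b' c' d' : algC) (s t : bool) :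
 P = u^+2 -> Q = w^+2 -> P = P1  *  G -> Q = Q1  *  G -> R = P1 * Q1 -> G  *  v = u * w -> G != 0 ->
 (a * a' + b * b' * P + c * c' * Q + d * d' * R) + (-1)^+s  *  (a * b' + b * a' + (c * d'+d * c') * Q1)  *  u
 + (-1)^+t  *  (a * c' + c * a' + (b * d'+d * b') * P1)  *  w + (-1)^+(s (+) t)  *  (a * d'+d * a'+(b * c'+c * b') * G)  *  v
 = (a + (-1)^+s  *  b  *  u + (-1)^+t  *  c  *  w + (-1)^+(s (+) t)  *  d  *  v)  * 
   (a' + (-1)^+s  *  b'  *  u + (-1)^+t  *  c'  *  w + (-1)^+(s (+) t)  *  d'  *  v).
Proof.
move=> -> -> hP hQ -> hv hG.
have eP1 : P1 = u^+2 / G by rewrite hP (mulfK hG).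
have eQ1 : Q1 = w^+2 / G by rewrite hQ (mulfK hG).
have ev : v = u  *  w / G by rewrite -hv [G  *  v]mulrC (mulfK hG).
rewrite eP1 eQ1 ev.
by case: s; case: t; rewrite /= ?expr0 ?expr1; field.
Qed.

Lemma rr_eq p q : (0 < p)%N -> rr p q = (p %/ gcdn p q * (q %/ gcdn p q))%N.
Proof.
move=> hp; rewrite /rr.
have g0 : (0 < gcdn p q)%N by rewrite gcdn_gt0 hp.
have Ep := divnK (dvdn_gcdl p q); have Eq := divnK (dvdn_gcdr p q).
set g := gcdn p q in g0 Ep Eq *; set p1 := (p %/ g)%N in Ep *; set q1 := (q %/ g)%N in Eq *.
rewrite -{1}Ep -{1}Eq (_ : (p1 * g * (q1 * g) = p1 * q1 * g ^ 2)%N); last by ring.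
by rewrite mulnK // expn_gt0 g0.
Qed.

Lemma sq_rel p q : (0 < p)%N -> (0 < q)%N ->
  (gcdn p q)%:R  *  sq (rr p q) = sq p  *  sq q.
Proof.
move=> hp hq.
have g0 : (0 < gcdn p q)%N by rewrite gcdn_gt0 hp.
apply/eqP; rewrite -(eqrXn2 (n := 2)) //; last first.
- by rewrite mulr_ge0 // sqrtC_ge0 ler0n.
- by rewrite mulr_ge0 // sqrtC_ge0 ler0n.
rewrite !exprMn /sq !sqrtCK rr_eq // -!natrX -!natrM; apply/eqP; congr (_%:R).
have Ep := divnK (dvdn_gcdl p q); have Eq := divnK (dvdn_gcdr p q).
set g := gcdn p q in g0 Ep Eq *; set p1 := (p %/ g)%N in Ep *; set q1 := (q %/ g)%N in Eq *.
by rewrite -Ep -Eq; ring.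
Qed.

Lemma emb_kmul p q s t x y : (0 < p)%N -> (0 < q)%N ->
  emb p q s t (kmul p q x y) = emb p q s t x * emb p q s t y.
Proof.
move=> hp hq.
have g0 : (0 < gcdn p q)%N by rewrite gcdn_gt0 hp.
have G0 : (gcdn p q)%:R != 0 :> algC by rewrite pnatr_eq0 -lt0n.
have eP : p%:R = sq p ^+ 2 :> algC by rewrite /sq sqrtCK.
have eQ : q%:R = sq q ^+ 2 :> algC by rewrite /sq sqrtCK.
have eP1 : (p %/ gcdn p q)%:R = sq p ^+ 2 / (gcdn p q)%:R :> algC.
  have E : p%:R = (p %/ gcdn p q)%:R * (gcdn p q)%:R :> algC.
    by rewrite -natrM divnK // dvdn_gcdl.
  by rewrite -eP E mulfK.
have eQ1 : (q %/ gcdn p q)%:R = sq q ^+ 2 / (gcdn p q)%:R :> algC.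
  have E : q%:R = (q %/ gcdn p q)%:R * (gcdn p q)%:R :> algC.
    by rewrite -natrM divnK // dvdn_gcdr.
  by rewrite -eQ E mulfK.
have eR : (rr p q)%:R = (p %/ gcdn p q)%:R * (q %/ gcdn p q)%:R :> algC.
  by rewrite rr_eq // natrM.
have ev : sq (rr p q) = sq p * sq q / (gcdn p q)%:R.
  by rewrite -sq_rel // [_ * sq _]mulrC mulfK.
rewrite /emb /kmul /= !qD !qM !qn.
rewrite eR eP1 eQ1 ev eP eQ.
by case: s; case: t; rewrite /= ?expr0 ?expr1; field.
Qed.

Lemma Kval0 p q z : biquad_deg4 p q -> Kval p q z = 0 -> forall s t, emb p q s t z = 0.
Proof.
move=> H hz s t; rewrite /emb.
have [-> -> -> ->] : [/\ z.1.1.1 = 0, z.1.1.2 = 0, z.1.2 = 0 & z.2 = 0].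
  by apply: H; move: hz; rewrite /Kval /emb /= expr0 !mul1r.
by rewrite !q0 !(mulr0, mul0r, addr0).
Qed.

Lemma poly_kelt p q x (P : {poly rat}) : (0 < p)%N -> (0 < q)%N ->
  exists z : Kelt, forall s t, emb p q s t z = (map_poly ratr P).[emb p q s t x].
Proof.
move=> hp hq; elim/poly_ind: P => [|P c [z Hz]].
  by exists (kconst 0) => s t; rewrite emb_kconst q0 map_poly0 horner0.
exists (kadd (kmul p q z x) (kconst c)) => s t.
rewrite emb_kadd emb_kmul // emb_kconst Hz.
by rewrite rmorphD rmorphM /= map_polyX map_polyC hornerMXaddC.
Qed.

Lemma emb_Aint p q x : (0 < p)%N -> (0 < q)%N -> biquad_deg4 p q ->
  inOK p q x -> forall s t, emb p q s t x \in Aint.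
Proof.
move=> hp hq H hx s t.
have [P0 [DP mon] _] := minCpolyP (Kval p q x).
have [z Hz] := @poly_kelt p q x P0 hp hq.
apply: (root_monic_Aint (p := minCpoly (Kval p q x))).
- rewrite /root DP -Hz; apply/eqP; apply: Kval0 => //.
  by rewrite /Kval Hz -DP; apply/eqP; exact: root_minCpoly.
- exact: minCpoly_monic.
- exact: hx.
Qed.

Lemma cop_div p q : (0 < p)%N -> coprime (p %/ gcdn p q) (q %/ gcdn p q).
Proof.
move=> hp.
have g0 : (0 < gcdn p q)%N by rewrite gcdn_gt0 hp.
by rewrite /coprime -(eqn_pmul2r g0) mul1n muln_gcdl !divnK ?dvdn_gcdl ?dvdn_gcdr.
Qed.

Lemma div_pos p q : (0 < p)%N -> (0 < p %/ gcdn p q)%N.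
Proof.
move=> hp; rewrite divn_gt0 ?gcdn_gt0 ?hp //.
by apply: dvdn_leq => //; exact: dvdn_gcdl.
Qed.

Lemma rr_pos p q : (0 < p)%N -> (0 < q)%N -> (0 < rr p q)%N.
Proof.
move=> hp hq; rewrite rr_eq // muln_gt0 div_pos //=.
by rewrite gcdnC div_pos.
Qed.

Lemma sqf_rr p q : (0 < p)%N -> (0 < q)%N -> squarefree p -> squarefree q ->
  squarefree (rr p q).
Proof.
move=> hp hq sp sq d hd; move: hd; rewrite rr_eq // => hd.
have cop := cop_div p q hp.
have p1pos := div_pos p q hp.
have q1pos : (0 < q %/ gcdn p q)%N by rewrite gcdnC div_pos.
set p1 := (p %/ gcdn p q)%N in cop hd p1pos *.
set q1 := (q %/ gcdn p q)%N in cop hd q1pos *.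
have p1p : (p1 %| p)%N by rewrite /p1 dvdn_div ?dvdn_gcdl.
have q1q : (q1 %| q)%N by rewrite /q1 dvdn_div ?dvdn_gcdr.
case: (ltngtP d 1) => [d0|d1|//].
  have d00 : d = 0%N by lia.
  by move: hd; rewrite d00 mul0n dvd0n muln_eq0 => /orP[] /eqP h; lia.
have pl := pdiv_prime d1; set l := pdiv d in pl.
have ld : (l * l %| p1 * q1)%N.
  by apply: dvdn_trans hd; apply: dvdn_mul; exact: pdiv_dvd.
have l1 := prime_gt1 pl.
have : (l %| p1 * q1)%N by apply: dvdn_trans ld; exact: dvdn_mulr.
rewrite Euclid_dvdM // => /orP[lp|lq].
- have cl : coprime (l * l) q1 by rewrite coprimeMl (coprime_dvdl lp cop).
  rewrite Gauss_dvdl // in ld.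
  have := sp l (dvdn_trans ld p1p); lia.
- have cl : coprime (l * l) p1.
    by rewrite coprimeMl (coprime_dvdl lq) // coprime_sym.
  rewrite Gauss_dvdr // in ld.
  have := sq l (dvdn_trans ld q1q); lia.
Qed.
Lemma sqf_bound (n : nat) (v : rat) : squarefree n -> v != 0 ->
  v ^+ 2 * n%:R \is a Num.int -> n%:R <= v ^+ 2 * n%:R.
Proof.
move=> sqf v0 /intrP[z Hz].
have k0 : (denq v)%:~R != 0 :> rat by rewrite intr_eq0 gt_eqF // denq_gt0.
have hv : v = (numq v)%:~R / (denq v)%:~R by rewrite divq_num_den.
have E : z * (denq v) ^+ 2 = (numq v) ^+ 2 * n%:Z.
  apply: (@intr_inj rat); rewrite !expr2 !intrM -expr2 -Hz.
  rewrite {1}hv; field.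
  exact: k0.
have dk : ((denq v) ^+ 2 %| (numq v) ^+ 2 * n%:Z)%Z.
  by rewrite -E dvdz_mull // dvdzz.
have cop : coprimez ((denq v) ^+ 2) ((numq v) ^+ 2).
  by apply: coprimezXl; apply: coprimezXr; rewrite coprimez_sym coprimezE coprime_num_den.
rewrite Gauss_dvdzr // in dk.
have k1 : `|denq v|%N = 1%N.
  by apply: sqf; move: dk; rewrite unfold_in /= abszX mulnn.
have kk : denq v = 1.
  by move: k1 (denq_gt0 v); case: (denq v) => // k /= ->.
have hv1 : v = (numq v)%:~R by rewrite {1}hv kk divr1.
have m0 : numq v != 0 by rewrite numq_eq0.
have h1 : (1 <= numq v * numq v)%R by nia.
have h2 : (1 : rat) <= (numq v * numq v)%:~R by rewrite ler1z.
rewrite hv1 -{1}[n%:R]mul1r; apply: ler_wpM2r => //.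
by rewrite expr2 -intrM.
Qed.

Lemma key_bound (n : nat) (v : rat) (W : algC) : squarefree n ->
  W = ratr v * sq n -> W \in Aint -> W != 0 -> n%:R <= W ^+ 2.
Proof.
move=> sqf hW WA W0.
have v0 : v != 0 by apply: contraNneq W0 => v0; rewrite hW v0 q0 mul0r.
have W2 : W ^+ 2 = ratr (v ^+ 2 * n%:R) by rewrite hW exprMn /sq sqrtCK qM rmorphXn qn.
have WA2 : W ^+ 2 \in Aint by rewrite rpredX.
have : W ^+ 2 \in Num.int by apply: Cint_rat_Aint => //; rewrite W2 Crat_rat.
rewrite W2 => /intrP[z Hz].
have hint : v ^+ 2 * n%:R \is a Num.int.
  apply/intrP; exists z; apply/eqP.
  by rewrite eq_le -!(ler_rat algC) Hz ratr_int lexx.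
have := sqf_bound n v sqf v0 hint.
by move=> h; rewrite -qn ler_rat.
Qed.

Lemma sr_neq0 p q : (0 < p)%N -> (0 < q)%N -> sq (rr p q) != 0.
Proof. by move=> hp hq; rewrite /sq sqrtC_eq0 pnatr_eq0 -lt0n rr_pos. Qed.
Lemma sp_neq0 p : (0 < p)%N -> sq p != 0.
Proof. by move=> hp; rewrite /sq sqrtC_eq0 pnatr_eq0 -lt0n. Qed.

Lemma keyp p q Z : (0 < p)%N -> (0 < q)%N -> squarefree p ->
  emb p q false false Z - emb p q true false Z = emb p q false true Z - emb p q true true Z ->
  emb p q false false Z - emb p q true false Z \in Aint ->
  emb p q false false Z != emb p q true false Z ->
  p%:R <= (emb p q false false Z - emb p q true false Z) ^+ 2.
Proof.
move=> hp hq sqf E WA W0.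
have sr0 := sr_neq0 p q hp hq.
have hd : ratr Z.2 = 0 :> algC.
  have : (emb p q false false Z - emb p q true false Z) -
         (emb p q false true Z - emb p q true true Z) = 4%:R * ratr Z.2 * sq (rr p q).
    by rewrite /emb /=; ring.
  rewrite E subrr => /esym/eqP.
  by rewrite -mulrA mulf_eq0 pnatr_eq0 /= mulf_eq0 (negbTE sr0) orbF => /eqP.
apply: (key_bound _ (2%:R * Z.1.1.2)) => //; last by rewrite subr_eq0.
by rewrite /emb /= hd qM qn; ring.
Qed.

Lemma keyq p q Z : (0 < p)%N -> (0 < q)%N -> squarefree q ->
  emb p q false false Z - emb p q false true Z = emb p q true false Z - emb p q true true Z ->
  emb p q false false Z - emb p q false true Z \in Aint ->
  emb p q false false Z != emb p q false true Z ->
  q%:R <= (emb p q false false Z - emb p q false true Z) ^+ 2.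
Proof.
move=> hp hq sqf E WA W0.
have sr0 := sr_neq0 p q hp hq.
have hd : ratr Z.2 = 0 :> algC.
  have : (emb p q false false Z - emb p q false true Z) -
         (emb p q true false Z - emb p q true true Z) = 4%:R * ratr Z.2 * sq (rr p q).
    by rewrite /emb /=; ring.
  rewrite E subrr => /esym/eqP.
  by rewrite -mulrA mulf_eq0 pnatr_eq0 /= mulf_eq0 (negbTE sr0) orbF => /eqP.
apply: (key_bound _ (2%:R * Z.1.2)) => //; last by rewrite subr_eq0.
by rewrite /emb /= hd qM qn; ring.
Qed.

Lemma keyr p q Z : (0 < p)%N -> (0 < q)%N -> squarefree p -> squarefree q ->
  emb p q false false Z - emb p q true false Z = emb p q true true Z - emb p q false true Z ->
  emb p q false false Z - emb p q true false Z \in Aint ->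
  emb p q false false Z != emb p q true false Z ->
  (rr p q)%:R <= (emb p q false false Z - emb p q true false Z) ^+ 2.
Proof.
move=> hp hq sqp sqq E WA W0.
have sp0 := sp_neq0 p hp.
have hd : ratr Z.1.1.2 = 0 :> algC.
  have : (emb p q false false Z - emb p q true false Z) -
         (emb p q true true Z - emb p q false true Z) = 4%:R * ratr Z.1.1.2 * sq p.
    by rewrite /emb /=; ring.
  rewrite E subrr => /esym/eqP.
  by rewrite -mulrA mulf_eq0 pnatr_eq0 /= mulf_eq0 (negbTE sp0) orbF => /eqP.
apply: (key_bound _ (2%:R * Z.2)) => //; first exact: sqf_rr.
  by rewrite /emb /= hd qM qn; ring.
by rewrite subr_eq0.
Qed.

Lemma sum_gt_sqrt (X X' d : algC) : 0 < X -> 0 < X' -> 0 <= d ->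
  d <= (X - X') ^+ 2 -> sqrtC d < X + X'.
Proof.
move=> hX hX' hd hle.
have s0 : 0 <= X + X' by rewrite ltW // addr_gt0.
rewrite -(sqrCK s0) ltr_sqrtC ?qualifE /= ?exprn_ge0 //.
apply: (le_lt_trans hle).
have -> : (X + X') ^+ 2 = (X - X') ^+ 2 + 4%:R * X * X' by ring.
by rewrite ltrDl !mulr_gt0 // ltr0n.
Qed.

Lemma pair_bound (b0 b1 b2 b3 c0 c1 c2 c3 d : algC) :
  0 < b0 -> 0 < b1 -> 0 < b2 -> 0 < b3 ->
  0 < c0 -> 0 < c1 -> 0 < c2 -> 0 < c3 -> 0 <= d ->
  (b0 * b1 * (c2 * c3) != b2 * b3 * (c0 * c1) ->
     d <= (b0 * b1 * (c2 * c3) - b2 * b3 * (c0 * c1)) ^+ 2) ->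
  (b0 * b1 * (b2 * c3 + c2 * b3) != b2 * b3 * (b0 * c1 + c0 * b1) ->
     d <= (b0 * b1 * (b2 * c3 + c2 * b3) - b2 * b3 * (b0 * c1 + c0 * b1)) ^+ 2) ->
  (c0 * c1 * (b2 * c3 + c2 * b3) != c2 * c3 * (b0 * c1 + c0 * b1) ->
     d <= (c0 * c1 * (b2 * c3 + c2 * b3) - c2 * c3 * (b0 * c1 + c0 * b1)) ^+ 2) ->
  (b0 + c0) * (b1 + c1) * ((b2 + c2) * (b3 + c3)) < 2%:R * sqrtC d ->
  b0 * b1 * (c2 * c3) = b2 * b3 * (c0 * c1).
Proof.
move=> hb0 hb1 hb2 hb3 hc0 hc1 hc2 hc3 hd H1 H2 H3 hlt.
set B := b0 * b1 in H1 H2 H3 *; set B' := b2 * b3 in H1 H2 H3 *.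
set C := c0 * c1 in H1 H2 H3 *; set C' := c2 * c3 in H1 H2 H3 *.
set D := b0 * c1 + c0 * b1 in H1 H2 H3 *; set D' := b2 * c3 + c2 * b3 in H1 H2 H3 *.
have pB : 0 < B by rewrite mulr_gt0.
have pB' : 0 < B' by rewrite mulr_gt0.
have pC : 0 < C by rewrite mulr_gt0.
have pC' : 0 < C' by rewrite mulr_gt0.
have pD : 0 < D by rewrite addr_gt0 ?mulr_gt0.
have pD' : 0 < D' by rewrite addr_gt0 ?mulr_gt0.
have Eprod : (b0 + c0) * (b1 + c1) * ((b2 + c2) * (b3 + c3)) =
  B * B' + C * C' + D * D' + (B * C' + B' * C) + (B * D' + B' * D) + (C * D' + C' * D).
  by rewrite /B /B' /C /C' /D /D'; ring.
apply/eqP; apply: contraTT hlt => ne1.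
have key : (B * D' != B' * D) || (C * D' != C' * D).
  case: (eqVneq (B * D') (B' * D)) => [e2|//].
  case: (eqVneq (C * D') (C' * D)) => [e3|]; last by rewrite orbT.
  exfalso; apply: (negP ne1); apply/eqP.
  have : (B * C' - B' * C) * (D * D') = 0.
    rewrite (_ : (B * C' - B' * C) * (D * D') = (B * D') * (C' * D) - (B' * D) * (C * D')); last by ring.
    by rewrite e2 e3 subrr.
  move/eqP; rewrite mulf_eq0 (gt_eqF (mulr_gt0 pD pD')) orbF subr_eq0.
  by move/eqP.
have s1 := sum_gt_sqrt _ _ _ (mulr_gt0 pB pC') (mulr_gt0 pB' pC) hd (H1 ne1).
suff hh : 2%:R * sqrtC d < (b0 + c0) * (b1 + c1) * ((b2 + c2) * (b3 + c3)).
  by rewrite lt_gtF.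
rewrite Eprod mulr_natl mulr2n.
case/orP: key => [ne2|ne3].
- have s2 := sum_gt_sqrt _ _ _ (mulr_gt0 pB pD') (mulr_gt0 pB' pD) hd (H2 ne2).
  apply: (lt_le_trans (ltrD s1 s2)).
  set S3 := C * D' + C' * D.
  have -> : B * B' + C * C' + D * D' + (B * C' + B' * C) + (B * D' + B' * D) + S3 =
     (B * C' + B' * C) + (B * D' + B' * D) + (B * B' + C * C' + D * D' + S3) by ring.
  by rewrite lerDl ltW // !addr_gt0 ?mulr_gt0.
- have s2 := sum_gt_sqrt _ _ _ (mulr_gt0 pC pD') (mulr_gt0 pC' pD) hd (H3 ne3).
  apply: (lt_le_trans (ltrD s1 s2)).
  set S3 := B * D' + B' * D.
  have -> : B * B' + C * C' + D * D' + (B * C' + B' * C) + S3 + (C * D' + C' * D) =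
     (B * C' + B' * C) + (C * D' + C' * D) + (B * B' + C * C' + D * D' + S3) by ring.
  by rewrite lerDl ltW // !addr_gt0 ?mulr_gt0.
Qed.

Lemma AB (x y : algC) : x \in Aint -> y \in Aint -> x - y \in Aint.
Proof. exact: rpredB. Qed.
Lemma AD (x y : algC) : x \in Aint -> y \in Aint -> x + y \in Aint.
Proof. exact: rpredD. Qed.
Lemma AM (x y : algC) : x \in Aint -> y \in Aint -> x * y \in Aint.
Proof. exact: rpredM. Qed.

Lemma min_le (x y : algC) : x \is Num.real -> y \is Num.real ->
  Num.min x y <= x /\ Num.min x y <= y.
Proof.
move=> hx hy; rewrite (comparable_minEgt (real_comparable hx hy)).
case: ifP => h; first by split; [exact: ltW | exact: lexx].
by split; [exact: lexx | rewrite real_leNgt // h].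
Qed.

Lemma field_p p q y z : (0 < p)%N -> (0 < q)%N -> squarefree p -> biquad_deg4 p q ->
  inOK p q y -> inOK p q z -> totpos p q y -> totpos p q z ->
  (emb p q false false y + emb p q false false z) * (emb p q false true y + emb p q false true z) *
  ((emb p q true false y + emb p q true false z) * (emb p q true true y + emb p q true true z))
   < 2%:R * sqrtC p%:R ->
  emb p q false false y * emb p q false true y * (emb p q true false z * emb p q true true z) =
  emb p q true false y * emb p q true true y * (emb p q false false z * emb p q false true z).
Proof.
move=> hp hq sqf H hy hz py pz hlt.
have Ay := emb_Aint p q y hp hq H hy; have Az := emb_Aint p q z hp hq H hz.
apply: (pair_bound _ _ _ _ _ _ _ _ _ (py _ _) (py _ _) (py _ _) (py _ _) (pz _ _) (pz _ _) (pz _ _) (pz _ _)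
  (ler0n _ _) _ _ _ hlt).
- move=> ne.
  pose Z := kmul p q (kmul p q y (cj false true y)) (kmul p q (cj true false z) (cj true true z)).
  have hZ : forall s t, emb p q s t Z = emb p q s t y * emb p q s (t (+) true) y *
     (emb p q (s (+) true) t z * emb p q (s (+) true) (t (+) true) z).
    by move=> s t; rewrite !emb_kmul // !emb_cj !addbF.
  have := keyp p q Z hp hq sqf; rewrite !hZ /=; apply.
  + ring.
  + by repeat first [apply: Ay | apply: Az | apply: AB | apply: AD | apply: AM].
  + exact: ne.
- move=> ne.
  pose Z := kmul p q (kmul p q y (cj false true y))
     (kadd (kmul p q (cj true false y) (cj true true z)) (kmul p q (cj true false z) (cj true true y))).
  have hZ : forall s t, emb p q s t Z = emb p q s t y * emb p q s (t (+) true) y *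
     (emb p q (s (+) true) t y * emb p q (s (+) true) (t (+) true) z +
      emb p q (s (+) true) t z * emb p q (s (+) true) (t (+) true) y).
    by move=> s t; rewrite !emb_kmul // emb_kadd !emb_kmul // !emb_cj !addbF.
  have := keyp p q Z hp hq sqf; rewrite !hZ /=; apply.
  + ring.
  + by repeat first [apply: Ay | apply: Az | apply: AB | apply: AD | apply: AM].
  + exact: ne.
- move=> ne.
  pose Z := kmul p q (kmul p q z (cj false true z))
     (kadd (kmul p q (cj true false y) (cj true true z)) (kmul p q (cj true false z) (cj true true y))).
  have hZ : forall s t, emb p q s t Z = emb p q s t z * emb p q s (t (+) true) z *
     (emb p q (s (+) true) t y * emb p q (s (+) true) (t (+) true) z +
      emb p q (s (+) true) t z * emb p q (s (+) true) (t (+) true) y).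
    by move=> s t; rewrite !emb_kmul // emb_kadd !emb_kmul // !emb_cj !addbF.
  have := keyp p q Z hp hq sqf; rewrite !hZ /=; apply.
  + ring.
  + by repeat first [apply: Ay | apply: Az | apply: AB | apply: AD | apply: AM].
  + exact: ne.
Qed.

Lemma field_q p q y z : (0 < p)%N -> (0 < q)%N -> squarefree q -> biquad_deg4 p q ->
  inOK p q y -> inOK p q z -> totpos p q y -> totpos p q z ->
  (emb p q false false y + emb p q false false z) * (emb p q true false y + emb p q true false z) *
  ((emb p q false true y + emb p q false true z) * (emb p q true true y + emb p q true true z))
   < 2%:R * sqrtC q%:R ->
  emb p q false false y * emb p q true false y * (emb p q false true z * emb p q true true z) =
  emb p q false true y * emb p q true true y * (emb p q false false z * emb p q true false z).
Proof.
move=> hp hq sqf H hy hz py pz hlt.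
have Ay := emb_Aint p q y hp hq H hy; have Az := emb_Aint p q z hp hq H hz.
apply: (pair_bound _ _ _ _ _ _ _ _ _ (py _ _) (py _ _) (py _ _) (py _ _) (pz _ _) (pz _ _) (pz _ _) (pz _ _)
  (ler0n _ _) _ _ _ hlt).
- move=> ne.
  pose Z := kmul p q (kmul p q y (cj true false y)) (kmul p q (cj false true z) (cj true true z)).
  have hZ : forall s t, emb p q s t Z = emb p q s t y * emb p q (s (+) true) t y *
     (emb p q s (t (+) true) z * emb p q (s (+) true) (t (+) true) z).
    by move=> s t; rewrite !emb_kmul // !emb_cj !addbF.
  have := keyq p q Z hp hq sqf; rewrite !hZ /=; apply.
  + ring.
  + by repeat first [apply: Ay | apply: Az | apply: AB | apply: AD | apply: AM].
  + exact: ne.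
- move=> ne.
  pose Z := kmul p q (kmul p q y (cj true false y))
     (kadd (kmul p q (cj false true y) (cj true true z)) (kmul p q (cj false true z) (cj true true y))).
  have hZ : forall s t, emb p q s t Z = emb p q s t y * emb p q (s (+) true) t y *
     (emb p q s (t (+) true) y * emb p q (s (+) true) (t (+) true) z +
      emb p q s (t (+) true) z * emb p q (s (+) true) (t (+) true) y).
    by move=> s t; rewrite !emb_kmul // emb_kadd !emb_kmul // !emb_cj !addbF.
  have := keyq p q Z hp hq sqf; rewrite !hZ /=; apply.
  + ring.
  + by repeat first [apply: Ay | apply: Az | apply: AB | apply: AD | apply: AM].
  + exact: ne.
- move=> ne.
  pose Z := kmul p q (kmul p q z (cj true false z))
     (kadd (kmul p q (cj false true y) (cj true true z)) (kmul p q (cj false true z) (cj true true y))).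
  have hZ : forall s t, emb p q s t Z = emb p q s t z * emb p q (s (+) true) t z *
     (emb p q s (t (+) true) y * emb p q (s (+) true) (t (+) true) z +
      emb p q s (t (+) true) z * emb p q (s (+) true) (t (+) true) y).
    by move=> s t; rewrite !emb_kmul // emb_kadd !emb_kmul // !emb_cj !addbF.
  have := keyq p q Z hp hq sqf; rewrite !hZ /=; apply.
  + ring.
  + by repeat first [apply: Ay | apply: Az | apply: AB | apply: AD | apply: AM].
  + exact: ne.
Qed.

Lemma field_r p q y z : (0 < p)%N -> (0 < q)%N -> squarefree p -> squarefree q -> biquad_deg4 p q ->
  inOK p q y -> inOK p q z -> totpos p q y -> totpos p q z ->
  (emb p q false false y + emb p q false false z) * (emb p q true true y + emb p q true true z) *
  ((emb p q true false y + emb p q true false z) * (emb p q false true y + emb p q false true z))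
   < 2%:R * sqrtC (rr p q)%:R ->
  emb p q false false y * emb p q true true y * (emb p q true false z * emb p q false true z) =
  emb p q true false y * emb p q false true y * (emb p q false false z * emb p q true true z).
Proof.
move=> hp hq sqf sqq H hy hz py pz hlt.
have Ay := emb_Aint p q y hp hq H hy; have Az := emb_Aint p q z hp hq H hz.
apply: (pair_bound _ _ _ _ _ _ _ _ _ (py _ _) (py _ _) (py _ _) (py _ _) (pz _ _) (pz _ _) (pz _ _) (pz _ _)
  (ler0n _ _) _ _ _ hlt).
- move=> ne.
  pose Z := kmul p q (kmul p q y (cj true true y)) (kmul p q (cj true false z) (cj false true z)).
  have hZ : forall s t, emb p q s t Z = emb p q s t y * emb p q (s (+) true) (t (+) true) y *
     (emb p q (s (+) true) t z * emb p q s (t (+) true) z).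
    by move=> s t; rewrite !emb_kmul // !emb_cj !addbF.
  have := keyr p q Z hp hq sqf sqq; rewrite !hZ /=; apply.
  + ring.
  + by repeat first [apply: Ay | apply: Az | apply: AB | apply: AD | apply: AM].
  + exact: ne.
- move=> ne.
  pose Z := kmul p q (kmul p q y (cj true true y))
     (kadd (kmul p q (cj true false y) (cj false true z)) (kmul p q (cj true false z) (cj false true y))).
  have hZ : forall s t, emb p q s t Z = emb p q s t y * emb p q (s (+) true) (t (+) true) y *
     (emb p q (s (+) true) t y * emb p q s (t (+) true) z +
      emb p q (s (+) true) t z * emb p q s (t (+) true) y).
    by move=> s t; rewrite !emb_kmul // emb_kadd !emb_kmul // !emb_cj !addbF.
  have := keyr p q Z hp hq sqf sqq; rewrite !hZ /=; apply.
  + ring.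
  + by repeat first [apply: Ay | apply: Az | apply: AB | apply: AD | apply: AM].
  + exact: ne.
- move=> ne.
  pose Z := kmul p q (kmul p q z (cj true true z))
     (kadd (kmul p q (cj true false y) (cj false true z)) (kmul p q (cj true false z) (cj false true y))).
  have hZ : forall s t, emb p q s t Z = emb p q s t z * emb p q (s (+) true) (t (+) true) z *
     (emb p q (s (+) true) t y * emb p q s (t (+) true) z +
      emb p q (s (+) true) t z * emb p q s (t (+) true) y).
    by move=> s t; rewrite !emb_kmul // emb_kadd !emb_kmul // !emb_cj !addbF.
  have := keyr p q Z hp hq sqf sqq; rewrite !hZ /=; apply.
  + ring.
  + by repeat first [apply: Ay | apply: Az | apply: AB | apply: AD | apply: AM].
  + exact: ne.
Qed.

Lemma ratio4 (b0 b1 b2 b3 c0 c1 c2 c3 : algC) :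
  0 < b0 -> 0 < b1 -> 0 < b2 -> 0 < b3 ->
  0 < c0 -> 0 < c1 -> 0 < c2 -> 0 < c3 ->
  b0 * b1 * (c2 * c3) = b2 * b3 * (c0 * c1) ->
  b0 * b2 * (c1 * c3) = b1 * b3 * (c0 * c2) ->
  b0 * b3 * (c2 * c1) = b2 * b1 * (c0 * c3) ->
  [/\ c1 = c0 / b0 * b1, c2 = c0 / b0 * b2 & c3 = c0 / b0 * b3].
Proof.
move=> hb0 hb1 hb2 hb3 hc0 hc1 hc2 hc3 Ep Eq Er.
have nb0 := gt_eqF hb0; have nb1 := gt_eqF hb1; have nb2 := gt_eqF hb2; have nb3 := gt_eqF hb3.
set r0 := c0 / b0; set r1 := c1 / b1; set r2 := c2 / b2; set r3 := c3 / b3.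
have pr0 : 0 < r0 by rewrite divr_gt0.
have pr1 : 0 < r1 by rewrite divr_gt0.
have pr2 : 0 < r2 by rewrite divr_gt0.
have pr3 : 0 < r3 by rewrite divr_gt0.
have Rp : r2 * r3 = r0 * r1.
  apply/eqP; rewrite -subr_eq0.
  have -> : r2 * r3 - r0 * r1 = (b0 * b1 * (c2 * c3) - b2 * b3 * (c0 * c1)) / (b0 * b1 * b2 * b3).
    by rewrite /r0 /r1 /r2 /r3; field; rewrite ?nb0 ?nb1 ?nb2 ?nb3.
  by rewrite Ep subrr mul0r.
have Rq : r1 * r3 = r0 * r2.
  apply/eqP; rewrite -subr_eq0.
  have -> : r1 * r3 - r0 * r2 = (b0 * b2 * (c1 * c3) - b1 * b3 * (c0 * c2)) / (b0 * b1 * b2 * b3).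
    by rewrite /r0 /r1 /r2 /r3; field; rewrite ?nb0 ?nb1 ?nb2 ?nb3.
  by rewrite Eq subrr mul0r.
have Rr : r2 * r1 = r0 * r3.
  apply/eqP; rewrite -subr_eq0.
  have -> : r2 * r1 - r0 * r3 = (b0 * b3 * (c2 * c1) - b2 * b1 * (c0 * c3)) / (b0 * b1 * b2 * b3).
    by rewrite /r0 /r1 /r2 /r3; field; rewrite ?nb0 ?nb1 ?nb2 ?nb3.
  by rewrite Er subrr mul0r.
have e12 : r1 = r2.
  have : r0 * (r1 ^+ 2 - r2 ^+ 2) = 0.
    have -> : r0 * (r1 ^+ 2 - r2 ^+ 2) = r1 * (r0 * r1) - r2 * (r0 * r2) by ring.
    by rewrite -Rp -Rq; ring.
  move/eqP; rewrite mulf_eq0 (gt_eqF pr0) /= subr_eq0 eqrXn2 ?ltW //.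
  by move/eqP.
have e23 : r3 = r2.
  have : r1 * (r3 ^+ 2 - r2 ^+ 2) = 0.
    have -> : r1 * (r3 ^+ 2 - r2 ^+ 2) = r3 * (r1 * r3) - r2 * (r2 * r1) by ring.
    by rewrite Rq Rr; ring.
  move/eqP; rewrite mulf_eq0 (gt_eqF pr1) /= subr_eq0 eqrXn2 ?ltW //.
  by move/eqP.
have e01 : r0 = r1.
  have : r1 * (r1 - r0) = 0.
    have -> : r1 * (r1 - r0) = r2 * r3 - r0 * r1 by rewrite -e12 e23 -e12; ring.
    by rewrite Rp subrr.
  move/eqP; rewrite mulf_eq0 (gt_eqF pr1) /= subr_eq0.
  by move/eqP.
have K1 : c1 = r1 * b1 by rewrite /r1 divfK ?nb1.
have K2 : c2 = r2 * b2 by rewrite /r2 divfK ?nb2.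
have K3 : c3 = r3 * b3 by rewrite /r3 divfK ?nb3.
by split; [rewrite K1 e01 | rewrite K2 e01 e12 | rewrite K3 e01 e12 e23].
Qed.

Lemma qV (a : rat) : ratr (a^-1) = (ratr a)^-1 :> algC.
Proof. by rewrite fmorphV. Qed.

Lemma emb_sum p q x : emb p q false false x + emb p q false true x +
  emb p q true false x + emb p q true true x = 4%:R * ratr x.1.1.1.
Proof. by rewrite /emb /=; ring. Qed.

Lemma ratio_rat p q y z (r : algC) : totpos p q y ->
  (forall s t, emb p q s t z = r * emb p q s t y) -> 0 < r ->
  exists l : rat, 0 < l /\ r = ratr l.
Proof.
move=> py hz hr.
have Sy : 0 < 4%:R * ratr y.1.1.1 :> algC.
  rewrite -(emb_sum p q).
  exact: addr_gt0 (addr_gt0 (addr_gt0 (py _ _) (py _ _)) (py _ _)) (py _ _).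
have Sz : 4%:R * ratr z.1.1.1 = r * (4%:R * ratr y.1.1.1) :> algC.
  by rewrite -!(emb_sum p q) !hz; ring.
have y0 : ratr y.1.1.1 != 0 :> algC.
  by apply: contraTneq Sy => ->; rewrite mulr0 ltxx.
exists (z.1.1.1 / y.1.1.1).
have El : r = ratr (z.1.1.1 / y.1.1.1).
  rewrite qM qV; apply: (mulIf y0); rewrite mulfVK //.
  apply: (mulfI (x := 4%:R)); first by rewrite pnatr_eq0.
  by rewrite Sz; ring.
split => //.
by rewrite -(ltr_rat algC) q0 -El.
Qed.

Lemma final_step p q alpha y (l : rat) : 0 < l -> Kval p q alpha \in Aint ->
  Kval p q y \in Aint -> Kval p q alpha = (1 + ratr l) * Kval p q y ->
  exists n : nat, (1 < n)%N /\
     exists g : Kelt, inOK p q g /\ Kval p q alpha = n%:R * Kval p q g.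
Proof.
move=> l0 hA hY hE.
have m0 : 0 < numq l by rewrite numq_gt0.
have k0 : 0 < denq l by rewrite denq_gt0.
have hl : ratr l = (numq l)%:~R / (denq l)%:~R :> algC.
  by rewrite -{1}(divq_num_den l) qM qV !ratr_int.
have cop : gcdz (numq l + denq l) (denq l) = 1.
  rewrite gcdzC addrC gcdzDl gcdzC /gcdz.
  by have /eqP -> := coprime_num_den l.
have [u [v Huv]] := Bezoutz (numq l + denq l) (denq l).
rewrite cop in Huv.
set n := absz (numq l + denq l).
have nE : (n : int) = numq l + denq l by rewrite /n gtz0_abs // addr_gt0.
have n1 : (1 < n)%N.
  have : (1 < (n : int))%R by rewrite nE; lia.
  by rewrite ltz_nat.
have nR : (n%:R : algC) = (numq l + denq l)%:~R by rewrite -nE.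
have nR0 : (n%:R : algC) != 0 by rewrite pnatr_eq0; lia.
exists n; split => //.
exists (kscale (n%:R)^-1 alpha); split.
  rewrite /inOK /Kval emb_kscale qV qn -/(Kval p q alpha).
  have kR0 : ((denq l)%:~R : algC) != 0 by rewrite intr_eq0 gt_eqF.
  have HV : (v%:~R : algC) = (1 - u%:~R * (numq l + denq l)%:~R) / (denq l)%:~R.
    have Huv' : (u%:~R * (numq l + denq l)%:~R + v%:~R * (denq l)%:~R : algC) = 1.
      by rewrite -!intrM -intrD Huv.
    apply: (mulIf kR0); rewrite mulfVK //.
    by move: Huv'; set A := _ * _; set B := _ * _ => <-; ring.
  have -> : (n%:R)^-1 * Kval p q alpha = u%:~R * Kval p q alpha + v%:~R * Kval p q y.
    have mk0 : ((numq l)%:~R + (denq l)%:~R : algC) != 0.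
      by rewrite -intrD intr_eq0 gt_eqF // addr_gt0.
    rewrite HV hE hl nR intrD; field.
    by apply/andP; split; [exact: kR0 | exact: mk0].
  by apply: AD; apply: AM => //; apply: Aint_int.
by rewrite /Kval emb_kscale qV qn mulVKf.
Qed.

Lemma min_real (x y : algC) : x \is Num.real -> y \is Num.real -> Num.min x y \is Num.real.
Proof.
by move=> hx hy; rewrite (comparable_minEgt (real_comparable hx hy)); case: ifP.
Qed.

Theorem proposition4 (p q : nat) (alpha : Kelt) :
  (0 < p)%N -> (0 < q)%N -> squarefree p -> squarefree q ->
  biquad_deg4 p q ->
  inOK p q alpha -> totpos p q alpha ->
  normK p q alpha < 2 * Num.min (sq p) (Num.min (sq q) (sq (rr p q))) ->
  (forall n : nat, (1 < n)%N ->
     ~ (exists g : Kelt, inOK p q g /\ Kval p q alpha = n%:R * Kval p q g)) ->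
  indecomposable p q alpha.
Proof.
move=> hp hq sqp sqq H hA hpos hN hnd.
split; first exact: hA.
split; first exact: hpos.
case=> y [z [hy hz py pz hsum]].
have hadd : forall s t, emb p q s t alpha = emb p q s t y + emb p q s t z.
  move=> s t; apply/eqP; rewrite -subr_eq0; apply/eqP.
  have := Kval0 p q (kadd alpha (kopp (kadd y z))) H _ s t.
  rewrite emb_kadd emb_kopp emb_kadd; apply.
  rewrite /Kval emb_kadd emb_kopp emb_kadd; move: hsum; rewrite /Kval => ->.
  by rewrite subrr.
have rl : forall n : nat, sq n \is Num.real by move=> n; rewrite sqrtC_real ?ler0n.
have [m1 m2] := min_le _ _ (rl p) (min_real _ _ (rl q) (rl (rr p q))).
have [m3 m4] := min_le _ _ (rl q) (rl (rr p q)).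
have two0 : (0 : algC) <= 2 by rewrite ler0n.
have Np : normK p q alpha < 2%:R * sqrtC p%:R.
  by apply: (lt_le_trans hN); rewrite ler_wpM2l.
have Nq : normK p q alpha < 2%:R * sqrtC q%:R.
  by apply: (lt_le_trans hN); rewrite ler_wpM2l // (le_trans m2 m3).
have Nr : normK p q alpha < 2%:R * sqrtC (rr p q)%:R.
  by apply: (lt_le_trans hN); rewrite ler_wpM2l // (le_trans m2 m4).
have Ep : emb p q false false y * emb p q false true y * (emb p q true false z * emb p q true true z) =
  emb p q true false y * emb p q true true y * (emb p q false false z * emb p q false true z).
  apply: field_p => //; rewrite -!hadd.
  by move: Np; rewrite /normK mulrA.
have Eq : emb p q false false y * emb p q true false y * (emb p q false true z * emb p q true true z) =
  emb p q false true y * emb p q true true y * (emb p q false false z * emb p q true false z).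
  apply: field_q => //; rewrite -!hadd.
  by move: Nq; rewrite /normK (_ : _ * _ * _ * _ = emb p q false false alpha * emb p q true false alpha *
    (emb p q false true alpha * emb p q true true alpha)) //; ring.
have Er : emb p q false false y * emb p q true true y * (emb p q true false z * emb p q false true z) =
  emb p q true false y * emb p q false true y * (emb p q false false z * emb p q true true z).
  apply: field_r => //; rewrite -!hadd.
  by move: Nr; rewrite /normK (_ : _ * _ * _ * _ = emb p q false false alpha * emb p q true true alpha *
    (emb p q true false alpha * emb p q false true alpha)) //; ring.
have [c1 c2 c3] := ratio4 _ _ _ _ _ _ _ _ (py _ _) (py _ _) (py _ _) (py _ _) (pz _ _) (pz _ _) (pz _ _) (pz _ _) Ep Eq Er.
set r := emb p q false false z / emb p q false false y in c1 c2 c3.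
have c0 : emb p q false false z = r * emb p q false false y.
  by rewrite /r divfK // gt_eqF.
have hz' : forall s t, emb p q s t z = r * emb p q s t y.
  by case; case.
have [l [l0 hl]] := ratio_rat p q y z r py hz' (divr_gt0 (pz _ _) (py _ _)).
have hE : Kval p q alpha = (1 + ratr l) * Kval p q y.
  by rewrite /Kval hadd hz' -hl mulrDl mul1r.
have [n [n1 [g [hg hng]]]] := final_step p q alpha y l l0 hA hy hE.
by apply: (hnd n n1); exists g.
Qed.
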